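(* Let $m,m',\ell\in\mathbb{N}$. Let $x\in\mathbb{R}^m$ and $x'\in\mathbb{R}^{m'}$ be two time series with $\mathrm{set}(x)=\mathrm{set}(x')$ and with the same set of $\ell$-profiles, i.e. $D_{(x,\ell)}=D_{(x',\ell)}$. Then for every $y\in\mathbb{R}^\ell$ we have $d_{dF}(x,y)=d_{dF}(x',y)$.
   Context: A time series of complexity $m$ is a vector $x=(x_1,\dots,x_m)\in\mathbb{R}^m$; $\mathrm{set}(x)=\{x_i: 1\le i\le m\}$, and for $z\in\mathrm{set}(x)$, $\mathrm{rank}_x(z)$ is the rank of $z$ in $\mathrm{set}(x)$ (ordered increasingly). For $x\in\mathbb{R}^m$ and $y\in\mathbb{R}^\ell$, a traversal is a sequence of index pairs $(i,j)\in[m]\times[\ell]$ starting at $(1,1)$, ending at $(m,\ell)$, in which each pair $(i,j)$ is followed by one of $(i,j+1)$, $(i+1,j)$, $(i+1,j+1)$; $x_i$ and $y_j$ are matched if $(i,j)$ occurs in it. The discrete Fréchet distance $d_{dF}(x,y)$ is the minimum over all traversals $T$ of $\max_{(i,j)\in T}|x_i-y_j|$. For a traversal $M$ of $x$ with a time series of complexity $\ell$, the traversal sectors are $S^{(x,M)}_j=\{x_i: i\in[m],\ x_i \text{ and } y_j \text{ matched by } M\}$ for $j\in[\ell]$, and the $\ell$-profile of $(x,M)$ is the sequence $\big((\mathrm{rank}_x(\min S^{(x,M)}_1),\mathrm{rank}_x(\max S^{(x,M)}_1)),\dots,(\mathrm{rank}_x(\min S^{(x,M)}_\ell),\mathrm{rank}_x(\max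 S^{(x,M)}_\ell))\big)$. $D_{(x,\ell)}$ denotes the set of all $\ell$-profiles of $(x,M)$ over all traversals $M$ between time series of complexity $m$ and time series of complexity $\ell$. *)

(* Defs.v *)
(* Time series are sequences over an
   arbitrary R : realType; the complexity of x is size x; indices are 0-based. *)
From mathcomp Require Import all_boot all_order all_algebra.
From mathcomp Require Import all_classical all_reals.
Set Implicit Arguments.
Unset Strict Implicit.
Unset Printing Implicit Defensive.
Import Order.TTheory GRing.Theory Num.Theory.
Local Open Scope ring_scope.

Definition trav_step (p q : nat * nat) : bool :=
  [|| (q == (p.1, p.2.+1)), (q == (p.1.+1, p.2)) | (q == (p.1.+1, p.2.+1))].

Definition is_traversal (m l : nat) (T : seq (nat * nat)) : bool :=
  match T with
  | [::] => false
  | p :: T' =>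
      [&& p == (0%N, 0%N), last p T' == (m.-1, l.-1),
          all (fun q => (q.1 < m)%N && (q.2 < l)%N) T & path trav_step p T']
  end.

Definition trav_cost (R : realType) (x y : seq R) (T : seq (nat * nat)) : R :=
  \big[Num.max/0]_(p <- T) `|x`_p.1 - y`_p.2|.

Definition dF (R : realType) (x y : seq R) : R :=
  inf [set c | exists T, is_traversal (size x) (size y) T /\ c = trav_cost x y T]%classic.

Definition rank (R : realType) (x : seq R) (z : R) : nat :=
  (count (fun w => w < z) (undup x)).+1.

Definition sector (R : realType) (x : seq R) (M : seq (nat * nat)) (j : nat) : seq R :=
  [seq x`_(p.1) | p <- M & p.2 == j].

Definition seq_min (R : realType) (s : seq R) : R :=
  \big[Num.min/head 0 s]_(z <- s) z.
Definition seq_max (R : realType) (s : seq R) : R :=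
  \big[Num.max/head 0 s]_(z <- s) z.

Definition profile (R : realType) (x : seq R) (l : nat) (M : seq (nat * nat))
  : seq (nat * nat) :=
  [seq (rank x (seq_min (sector x M j)), rank x (seq_max (sector x M j)))
  | j <- iota 0 l].

Definition Dprofiles (R : realType) (x : seq R) (l : nat) : set (seq (nat * nat)) :=
  [set P | exists M, is_traversal (size x) l M /\ P = profile x l M]%classic.

(* Main.v *)
Require Import Defs.
From mathcomp Require Import all_boot all_order all_algebra.
From mathcomp Require Import all_classical all_reals.
From mathcomp Require Import lra zify.
Set Implicit Arguments.
Unset Strict Implicit.
Unset Printing Implicit Defensive.
Import Order.TTheory GRing.Theory Num.Theory.
Local Open Scope ring_scope.

Local Arguments rank : simpl never.
Section Aux.
Variable R : realType.

Lemma bigmax0_le (T : eqType) (s : seq T) (F : T -> R) c :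
  (\big[Num.max/0]_(p <- s) F p <= c) <-> (0 <= c /\ forall p, p \in s -> F p <= c).
Proof.
elim: s => [|a s IH]; first by rewrite big_nil; split => [h|[]//]; split.
rewrite big_cons ge_max; split.
  move=> /andP[h1 /IH [h2 h3]]; split=> // p; rewrite inE => /orP[/eqP->//|]; exact: h3.
move=> [h1 h2]; rewrite h2 ?mem_head //=; apply/IH; split=> // p hp; apply: h2.
by rewrite inE hp orbT.
Qed.

Lemma bigmin_props (s : seq R) idx :
  let b := \big[Num.min/idx]_(z <- s) z in
  b \in idx :: s /\ b <= idx /\ forall z, z \in s -> b <= z.
Proof.
elim: s => [|a s IH] /=; first by rewrite big_nil mem_head.
rewrite big_cons; move: IH => [h1 [h2 h3]].
set r := \big[Num.min/idx]_(z <- s) z in h1 h2 h3 *.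
split; last split.
- case: (lerP a r) => h.
    by rewrite !inE eqxx orbT.
  move: h1; rewrite !inE => /orP[->//|->]; by rewrite !orbT.
- rewrite ge_min h2; by rewrite orbT.
- move=> z; rewrite inE => /orP[/eqP->|hz]; rewrite ge_min ?lexx //.
  by rewrite h3 // orbT.
Qed.

Lemma bigmax_props (s : seq R) idx :
  let b := \big[Num.max/idx]_(z <- s) z in
  b \in idx :: s /\ idx <= b /\ forall z, z \in s -> z <= b.
Proof.
elim: s => [|a s IH] /=; first by rewrite big_nil mem_head.
rewrite big_cons; move: IH => [h1 [h2 h3]].
set r := \big[Num.max/idx]_(z <- s) z in h1 h2 h3 *.
split; last split.
- case: (lerP a r) => h.
    move: h1; rewrite !inE => /orP[->//|->]; by rewrite !orbT.
  by rewrite !inE eqxx orbT.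
- rewrite le_max h2; by rewrite orbT.
- move=> z; rewrite inE => /orP[/eqP->|hz]; rewrite le_max ?lexx //.
  by rewrite h3 // orbT.
Qed.

Lemma seq_min_props (s : seq R) v : v \in s ->
  seq_min s \in s /\ forall z, z \in s -> seq_min s <= z.
Proof.
case: s => [//|a s] _; rewrite /seq_min /=.
have [h1 [h2 h3]] := bigmin_props (a :: s) a.
split=> //; move: h1; rewrite inE => /orP[/eqP->|//]; exact: mem_head.
Qed.

Lemma seq_max_props (s : seq R) v : v \in s ->
  seq_max s \in s /\ forall z, z \in s -> z <= seq_max s.
Proof.
case: s => [//|a s] _; rewrite /seq_max /=.
have [h1 [h2 h3]] := bigmax_props (a :: s) a.
split=> //; move: h1; rewrite inE => /orP[/eqP->|//]; exact: mem_head.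
Qed.

Lemma path_cover (p : nat * nat) T j : path trav_step p T ->
  (p.2 <= j <= (last p T).2)%N -> exists2 q, q \in p :: T & q.2 = j.
Proof.
elim: T p => [|q T IH] p /=.
  move=> _ h; exists p; [exact: mem_head | lia].
move=> /andP[hs hp] hj.
case: (eqVneq p.2 j) => [<-|hne]; first by exists p; rewrite ?mem_head.
have hq : (q.2 <= j)%N.
  move: hs; rewrite /trav_step => /or3P[] /eqP -> /=; lia.
have [r hr1 hr2] := IH q hp ltac:(lia).
by exists r; rewrite // inE hr1 orbT.
Qed.

Lemma trav_props m l T : is_traversal m l T ->
  (forall q, q \in T -> (q.1 < m)%N /\ (q.2 < l)%N) /\
  (forall j, (j < l)%N -> exists2 q, q \in T & q.2 = j).
Proof.
case: T => [//|p T] /and4P[/eqP hp /eqP hl ha hpath]; split.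
  move=> q hq; move: ha => /seq.allP H; by have /andP[] := H q hq.
move=> j hj; apply: (path_cover hpath); rewrite hl hp /=; lia.
Qed.

Lemma sectorP (x : seq R) T j v :
  reflect (exists2 q, q \in T & q.2 = j /\ v = x`_q.1) (v \in sector x T j).
Proof.
apply: (iffP mapP).
  by move=> [q]; rewrite mem_filter => /andP[/eqP h1 h2] ->; exists q.
by move=> [q h1 [h2 ->]]; exists q; rewrite // mem_filter h2 eqxx.
Qed.

Lemma sector_ne (x : seq R) l T j : is_traversal (size x) l T -> (j < l)%N ->
  exists v, v \in sector x T j.
Proof.
move=> /trav_props [_ h] /h [q hq hj]; exists x`_q.1; apply/sectorP.
by exists q.
Qed.

Lemma sector_in (x : seq R) l T j v : is_traversal (size x) l T ->
  v \in sector x T j -> v \in x.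
Proof.
move=> /trav_props [h _] /sectorP [q /h [h1 _] [_ ->]]; exact: mem_nth.
Qed.

Lemma conv_abs (a b v t c : R) : a <= v -> v <= b ->
  `|a - t| <= c -> `|b - t| <= c -> `|v - t| <= c.
Proof.
rewrite !ler_norml => h1 h2 /andP[h3 h4] /andP[h5 h6]; apply/andP; split; lra.
Qed.

Lemma cost_char (x y : seq R) l T c : is_traversal (size x) l T ->
  (trav_cost x y T <= c) <-> (0 <= c /\ forall j, (j < l)%N ->
     `|seq_min (sector x T j) - y`_j| <= c /\ `|seq_max (sector x T j) - y`_j| <= c).
Proof.
move=> HT; have [Hb _] := trav_props HT.
rewrite /trav_cost bigmax0_le; split=> [[h0 h]|[h0 h]]; split=> //.
  move=> j hj; have [v hv] := sector_ne HT hj.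
  have [hm _] := seq_min_props hv; have [hM _] := seq_max_props hv.
  split.
    by move: hm => /sectorP [q hq [<- ->]]; apply: h.
  by move: hM => /sectorP [q hq [<- ->]]; apply: h.
move=> p hp; have [_ hl] := Hb p hp.
have hv : x`_p.1 \in sector x T p.2 by apply/sectorP; exists p.
have [_ hm] := seq_min_props hv; have [_ hM] := seq_max_props hv.
have [h1 h2] := h _ hl.
exact: (conv_abs (hm _ hv) (hM _ hv) h1 h2).
Qed.

Lemma count_lt (s : seq R) a b : a < b -> a \in s ->
  (count (fun w : R => (w < a)%R) s < count (fun w : R => (w < b)%R) s)%N.
Proof.
move=> hab; elim: s => [//|c s IH]; rewrite inE /= => /orP[/eqP <-|hs].
  rewrite ltxx hab /=.
  have := @sub_count _ (fun w : R => w < a) (fun w : R => w < b)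
    (fun (w : R) (h : w < a) => lt_trans h hab) s; lia.
have := IH hs.
case: (ltrP c a) => h; first by rewrite (lt_trans h hab) /=; lia.
case: (c < b) => /=; lia.
Qed.

Lemma rank_eq (x x' : seq R) : x =i x' -> rank x =1 rank x'.
Proof.
move=> h z; rewrite /rank; congr S; apply/(permP (uniq_perm _ _ _)).
- exact: undup_uniq.
- exact: undup_uniq.
- by move=> w; rewrite !mem_undup.
Qed.

Lemma rank_inj (x : seq R) a b : a \in x -> b \in x -> rank x a = rank x b -> a = b.
Proof.
rewrite /rank -(mem_undup x) => ha; rewrite -(mem_undup x) => hb [].
case: (ltgtP a b) => // h.
  have := count_lt h ha; lia.
have := count_lt h hb; lia.
Qed.

Lemma cost_sub (x x' y : seq R) T : x =i x' ->
  Dprofiles x (size y) = Dprofiles x' (size y) ->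
  is_traversal (size x) (size y) T ->
  exists T', is_traversal (size x') (size y) T' /\ trav_cost x y T = trav_cost x' y T'.
Proof.
move=> Hx HD HT.
have : Dprofiles x (size y) (profile x (size y) T) by exists T.
rewrite HD => -[T' [HT' Hp]]; exists T'; split=> //.
have key : forall j, (j < size y)%N ->
    seq_min (sector x T j) = seq_min (sector x' T' j) /\
    seq_max (sector x T j) = seq_max (sector x' T' j).
  move=> j hj.
  have := congr1 (fun s => nth (0%N, 0%N) s j) Hp.
  rewrite /profile !(nth_map 0%N) ?size_iota // nth_iota //.
  rewrite add0n -!(rank_eq Hx); case=> h1 h2.
  have [v hv] := sector_ne HT hj; have [v' hv'] := sector_ne HT' hj.
  have [m1 _] := seq_min_props hv; have [m2 _] := seq_min_props hv'.
  have [M1 _] := seq_max_props hv; have [M2 _] := seq_max_props hv'.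
  have e1 : rank x (seq_min (sector x T j)) = rank x (seq_min (sector x' T' j))
    by rewrite /rank h1.
  have e2 : rank x (seq_max (sector x T j)) = rank x (seq_max (sector x' T' j))
    by rewrite /rank h2.
  split; [apply: (rank_inj _ _ e1) | apply: (rank_inj _ _ e2)].
  - exact: sector_in HT m1.
  - by rewrite Hx; exact: sector_in HT' m2.
  - exact: sector_in HT M1.
  - by rewrite Hx; exact: sector_in HT' M2.
apply/le_anti/andP; split.
  apply/(cost_char _ _ HT); have [h0 h] := (cost_char y _ HT').1 (lexx _).
  split=> // j hj; have [-> ->] := key j hj; exact: h.
apply/(cost_char _ _ HT'); have [h0 h] := (cost_char y _ HT).1 (lexx _).
split=> // j hj; have [<- <-] := key j hj; exact: h.
Qed.

End Aux.

Theorem lemma4p4 (R : realType) (m m' l : nat) (x x' : seq R) :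
  size x = m -> size x' = m' ->
  x =i x' ->
  Dprofiles x l = Dprofiles x' l ->
  forall y : seq R, size y = l -> dF x y = dF x' y.
Proof.
move=> _ _ Hx HD y Hy; subst l; rewrite /dF; congr inf.
apply/seteqP; split => c /= [T [HT ->]].
  by have [T' [HT' ->]] := cost_sub Hx HD HT; exists T'.
have Hx' : x' =i x by move=> z; rewrite Hx.
by have [T' [HT' ->]] := cost_sub Hx' (esym HD) HT; exists T'.
Qed.
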